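(* Let $\preceq$ be a binary relation on $L$. Then $\preceq$ is an E-relation if and only if $\preceq\, =\, \preceq_{\vec{\mathcal U}}$ for some $\vec{\mathcal U} \in \Upsilon$.
   Context: $L$ is a propositional language built from a finite set of propositional variables with the connectives $\neg,\wedge,\vee,\rightarrow,\top,\bot$; $W$ is the finite set of propositional worlds (truth assignments). For $\theta\in L$, $S_\theta=\{w\in W\mid w\models\theta\}$. For $E\cup\{\phi\}\subseteq L$, $E\models\phi$ means $\bigcap_{\theta\in E}S_\theta\subseteq S_\phi$; $\theta\models\phi$ means $\{\theta\}\models\phi$, and $\models\phi$ means $\emptyset\models\phi$. Sequences: consider finite sequences $\vec{\mathcal U}=(\mathcal U_0,\ldots,\mathcal U_k)$ ($k\ge 0$) of mutually disjoint subsets of $W$ (components may be empty, and $\emptyset$ may occur several times). For $\theta\in L$, $\mathrm{rank}^{\vec{\mathcal U}}(\theta)$ is the least $i$ with $\mathcal U_i\cap S_\theta\neq\emptyset$, and $\infty$ if there is no such $i$ (with $i<\infty$ for every integer $i$). Define $\theta\mid\!\sim_{\vec{\mathcal U}}\phi$ iff either $\mathrm{rank}^{\vec{\mathcal U}}(\theta)<\mathrm{rank}^{\vec{\mathcal U}}(\theta\wedge\neg\phi)$ or $\mathrm{rank}^{\vec{\mathcal U}}(\theta)=\infty$. $\vec{\mathcal U}$ is full iff $\bigcup_i\mathcal U_i=W$, and empty iff $\bigcup_i\mathcal U_i=\emptyset$; $\Upsilon$ is the set of all such sequences which are full or empty. For $\vec{\mathcal U}\in\Upsilon$ define $\preceq_{\vec{\mathcal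 U}}$ on $L$ by: $\theta\preceq_{\vec{\mathcal U}}\phi$ iff (it is not the case that $\neg\theta\vee\neg\phi\mid\!\sim_{\vec{\mathcal U}}\theta$) or $\neg\phi\mid\!\sim_{\vec{\mathcal U}}\bot$. An E-relation (epistemic entrenchment relation) is a relation $\preceq\subseteq L\times L$ such that for all $\theta,\phi,\psi\in L$: (E1) if $\theta\preceq\phi$ and $\phi\preceq\psi$ then $\theta\preceq\psi$; (E2) if $\theta\models\phi$ then $\theta\preceq\phi$; (E3) $\theta\preceq\theta\wedge\phi$ or $\phi\preceq\theta\wedge\phi$; (E4) if there exists $\psi\in L$ with $\bot\prec\psi$, then whenever $\theta\preceq\phi$ for all $\theta\in L$, we have $\models\phi$. Here $\prec$ is the strict part: $\theta\prec\phi$ iff $\theta\preceq\phi$ and not $\phi\preceq\theta$. *)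

(* Defs.v *)
From mathcomp Require Import all_boot.
Set Implicit Arguments. Unset Strict Implicit. Unset Printing Implicit Defensive.

Section Defs.
Variable V : finType.

Inductive form : Type :=
  | Var of V
  | Neg of form
  | And of form & form
  | Or of form & form
  | Imp of form & form
  | Top
  | Bot.

Definition world := {ffun V -> bool}.

Fixpoint sat (w : world) (f : form) : bool :=
  match f with
  | Var p => w p
  | Neg g => ~~ sat w g
  | And g h => sat w g && sat w h
  | Or g h => sat w g || sat w h
  | Imp g h => sat w g ==> sat w h
  | Top => true
  | Bot => false
  end.

Definition S (f : form) : {set world} := [set w | sat w f].

Definition entails (t f : form) : Prop := S t \subset S f.
Definition valid (f : form) : Prop := [set: world] \subset S f.

Definition is_seq (U : seq {set world}) : Prop :=
  0 < size U /\
  forall i j, i < size U -> j < size U -> i != j ->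
    nth set0 U i :&: nth set0 U j = set0.

(* rank; None stands for infinity *)
Definition rank (U : seq {set world}) (f : form) : option nat :=
  let i := find (fun A : {set world} => A :&: S f != set0) U in
  if i < size U then Some i else None.

Definition lt_rank (a b : option nat) : bool :=
  match a, b with
  | Some i, Some j => i < j
  | Some _, None => true
  | None, _ => false
  end.

Definition nmsim (U : seq {set world}) (t f : form) : bool :=
  lt_rank (rank U t) (rank U (And t (Neg f))) || (rank U t == None).

Definition full (U : seq {set world}) : bool :=
  \bigcup_(A <- U) A == [set: world].
Definition emptyseq (U : seq {set world}) : bool :=
  \bigcup_(A <- U) A == set0.

Definition in_Upsilon (U : seq {set world}) : Prop :=
  is_seq U /\ (full U \/ emptyseq U).

Definition preceq_U (U : seq {set world}) (t f : form) : Prop :=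
  ~~ nmsim U (Or (Neg t) (Neg f)) t \/ nmsim U (Neg f) Bot.

Definition E_relation (R : form -> form -> Prop) : Prop :=
  (forall t f g, R t f -> R f g -> R t g) /\
  (forall t f, entails t f -> R t f) /\
  (forall t f, R t (And t f) \/ R f (And t f)) /\
  ((exists g, R Bot g /\ ~ R g Bot) ->
     forall f, (forall t, R t f) -> valid f).

End Defs.

(* Main.v *)
Require Import Defs.
From mathcomp Require Import all_boot.
From mathcomp Require Import zify.
From Stdlib Require Import Classical ClassicalEpsilon FunctionalExtensionality PropExtensionality.
Set Implicit Arguments. Unset Strict Implicit. Unset Printing Implicit Defensive.

Definition le_rank (a b : option nat) : bool :=
  match a, b with
  | _, None => true
  | None, Some _ => false
  | Some i, Some j => i <= j
  end.

Definition min_rank (a b : option nat) : option nat :=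
  match a, b with
  | None, x => x
  | x, None => x
  | Some i, Some j => Some (minn i j)
  end.

Lemma rank_cons (V : finType) (A : {set world V}) U g :
  rank (A :: U) g = if A :&: S g != set0 then Some 0 else omap succn (rank U g).
Proof. rewrite /rank /=. case: (A :&: S g != set0) => //=. rewrite ltnS. by case: ifP. Qed.

Lemma rank_S (V : finType) (U : seq {set world V}) g h : S g = S h -> rank U g = rank U h.
Proof. by rewrite /rank => ->. Qed.

Lemma S_Or (V : finType) (a b : form V) : S (Or a b) = S a :|: S b.
Proof. by apply/setP => w; rewrite !inE. Qed.

Lemma rank_Or (V : finType) (U : seq {set world V}) a b :
  rank U (Or a b) = min_rank (rank U a) (rank U b).
Proof.
elim: U => [|A U IH] //. rewrite !rank_cons IH S_Or setIUr setU_eq0 negb_and.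
case: (A :&: S a != set0); case: (A :&: S b != set0) => //=;
case: (rank U a) => [i|]; case: (rank U b) => [j|] //=. by rewrite minnSS.
Qed.

Lemma rank_set0 (V : finType) (U : seq {set world V}) g : S g = set0 -> rank U g = None.
Proof. move=> H; elim: U => [|A U IH] //; by rewrite rank_cons H setI0 eqxx /= IH. Qed.

Lemma preceqE (V : finType) (U : seq {set world V}) t f :
  preceq_U U t f <-> le_rank (rank U (Neg t)) (rank U (Neg f)).
Proof.
rewrite /preceq_U /nmsim.
have -> : rank U (And (Or (Neg t) (Neg f)) (Neg t)) = rank U (Neg t).
  by apply: rank_S; apply/setP=> w; rewrite !inE /=; case: (sat w t); case: (sat w f).
have -> : rank U (And (Neg f) (Neg (Bot V))) = rank U (Neg f).
  by apply: rank_S; apply/setP=> w; rewrite !inE /= andbT.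
rewrite rank_Or.
case: (rank U (Neg t)) => [i|]; case: (rank U (Neg f)) => [j|] /=; rewrite ?ltnn ?orbF ?orbT;
  split => //; try tauto.
- by case=> // /negP h; lia.
- by move=> h; left; apply/negP; lia.
Qed.

Lemma le_rank_trans a b c : le_rank a b -> le_rank b c -> le_rank a c.
Proof. case: a => [i|]; case: b => [j|]; case: c => [k|] //=; apply: leq_trans. Qed.

Lemma rank_anti (V : finType) (U : seq {set world V}) g h :
  S g \subset S h -> le_rank (rank U h) (rank U g).
Proof.
move=> H. have -> : rank U h = rank U (Or g h) by apply: rank_S; rewrite S_Or; apply/esym/setUidPr.
rewrite rank_Or. case: (rank U g) => [i|]; case: (rank U h) => [j|] //=; apply: geq_minl.
Qed.

Lemma bigcup_seq_mem (V:finType) (U: seq {set world V}) w :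
  (w \in (\bigcup_(A <- U) A : {set world V})) = has (fun A : {set world V} => w \in A) U.
Proof. elim: U => [|A U IH]; by rewrite ?big_nil ?big_cons ?inE ?IH. Qed.

Lemma rank_None (V : finType) (U : seq {set world V}) g :
  rank U g = None <-> forall A, A \in U -> A :&: S g = set0.
Proof.
rewrite /rank; case: ifP => H; split => //.
- move=> HA. rewrite -has_find in H. case/hasP: H => A AU. by rewrite HA // eqxx.
- move=> _ A AU. move/negbT: H. rewrite -has_find => /hasPn /(_ A AU) /negbNE /eqP. done.
Qed.

Lemma rank_Some (V : finType) (U : seq {set world V}) g i :
  rank U g = Some i -> [/\ i < size U, nth set0 U i :&: S g != set0 &
     forall j, j < i -> nth set0 U j :&: S g = set0].
Proof.
rewrite /rank; case: ifP => // H [<-]. split => //.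
- rewrite -has_find in H. exact: (nth_find set0 H).
- move=> j hj. have := before_find set0 hj. rewrite /= => /negbFE/eqP. done.
Qed.

Lemma rank_empty (V : finType) (U : seq {set world V}) g : emptyseq U -> rank U g = None.
Proof.
move/eqP => H. apply/rank_None => A AU. apply/setP => w; rewrite !inE.

case wA: (w \in A) => //=. exfalso.
have : w \in (\bigcup_(A <- U) A : {set world V}) by rewrite bigcup_seq_mem; apply/hasP; exists A.
by rewrite H inE.
Qed.

Lemma rank_full (V : finType) (U : seq {set world V}) g : full U -> rank U g = None -> S g = set0.
Proof.
move/eqP => HU /rank_None HA. apply/setP => w; rewrite !inE. case sw: (sat w g) => //. exfalso.
have : w \in (\bigcup_(A <- U) A : {set world V}) by rewrite HU inE.
rewrite bigcup_seq_mem => /hasP [A AU wA].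
have := HA A AU. move/setP/(_ w). by rewrite !inE wA sw.
Qed.

Lemma dir2 (V : finType) (U : seq {set world V}) : in_Upsilon U ->
  E_relation (fun t f => le_rank (rank U (Neg t)) (rank U (Neg f))).
Proof.
move=> [_ HU]; split; [|split; [|split]].
- move=> t f g; apply: le_rank_trans.
- move=> t f H; apply: rank_anti; apply/subsetP => w; rewrite !inE /=; apply: contra => swt.
  by move/subsetP: H => /(_ w); rewrite !inE; apply.
- move=> t f.
  have -> : rank U (Neg (And t f)) = rank U (Or (Neg t) (Neg f)).
    by apply: rank_S; apply/setP=> w; rewrite !inE /= negb_and.
  rewrite rank_Or.
  case: (rank U (Neg t)) => [i|]; case: (rank U (Neg f)) => [j|] /=; try by left.
  + case: (leqP i j) => h; [left|right]; apply/idP; lia.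
  + by right.
- move=> [g [H1 H2]] f Hf. case: HU => HU.
  + have Ht : rank U (Neg (Top V)) = None by apply: rank_set0; apply/setP=> w; rewrite !inE.
    have := Hf (Top V). rewrite Ht. case E: (rank U (Neg f)) => [j|] //= _.
    have E' := rank_full HU E.
    apply/subsetP => w _. have : w \notin S (Neg f) by rewrite E' inE.
    by rewrite !inE /= negbK.
  + by rewrite !(rank_empty _ HU) in H2.
Qed.

Lemma card_S_lt (V : finType) (w : world V) t : ~~ sat w t -> #|S t| < #|world V|.
Proof.
move=> h. rewrite -cardsT; apply: proper_card; rewrite properT; apply/eqP => E.
have : w \in S t by rewrite E inE.
by rewrite inE (negbTE h).
Qed.

Lemma maxf (V : finType) (w : world V) :
  exists t, ~~ sat w t /\ forall t', ~~ sat w t' -> S t' \subset S t.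
Proof.
suff H : forall k t, ~~ sat w t -> #|world V| - #|S t| <= k ->
   exists t0, ~~ sat w t0 /\ forall t', ~~ sat w t' -> S t' \subset S t0.
  by apply: (H #|world V| (Bot V)) => //; apply: leq_subr.
elim=> [|k IH] t Ht Hk.
- exfalso. have := card_S_lt Ht. lia.
- case: (classic (forall t', ~~ sat w t' -> S t' \subset S t)) => [Hmax|Hn]; first by exists t.
  have [t' Ht'] := not_all_ex_not _ _ Hn.
  have [Ht'1 Ht'2] := imply_to_and _ _ Ht'.
  have Hor : ~~ sat w (Or t t') by rewrite /= negb_or Ht Ht'1.
  apply: (IH (Or t t')) => //.
  have Hp : #|S t| < #|S (Or t t')|.
    apply: proper_card; rewrite S_Or; apply/properP; split; first exact: subsetUl.
    have /subsetPn [x x1 x2] : ~~ (S t' \subset S t) by apply/negP.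
    by exists x => //; rewrite inE x1 orbT.
  have := card_S_lt Hor. lia.
Qed.

Definition tw (V : finType) (w : world V) : form V :=
  proj1_sig (constructive_indefinite_description _ (maxf w)).

Lemma tw_spec (V : finType) (w : world V) :
  ~~ sat w (tw w) /\ forall t', ~~ sat w t' -> S t' \subset S (tw w).
Proof. exact: (proj2_sig (constructive_indefinite_description _ (maxf w))). Qed.

Lemma R_total (V : finType) (R : form V -> form V -> Prop) (HE : E_relation R) t f :
  R t f \/ R f t.
Proof.
case: HE => E1 [E2 [E3 _]].
case: (E3 t f) => h; [left|right]; apply: E1 h _; apply: E2; apply/subsetP => w; rewrite !inE /=.
- by case/andP.
- by case/andP.
Qed.

Lemma sat_fold (V : finType) (F : world V -> form V) (s : seq (world V)) v :
  sat v (foldr (fun w acc => And (F w) acc) (Top V) s) = all (fun w => sat v (F w)) s.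
Proof. by elim: s => //= x s ->. Qed.

Lemma R_bigAnd (V : finType) (R : form V -> form V -> Prop) (HE : E_relation R)
  (F : world V -> form V) (s : seq (world V)) : s <> [::] ->
  exists w, w \in s /\ R (F w) (foldr (fun w acc => And (F w) acc) (Top V) s).
Proof.
case: HE => E1 [E2 [E3 _]].
elim: s => [|x s IH] // _.
case: (E3 (F x) (foldr (fun w acc => And (F w) acc) (Top V) s)) => h.
  by exists x; split; [exact: mem_head | exact: h].
case: s IH h => [|y s] IH h.
  exists x; split; first exact: mem_head.
  apply: E2; apply/subsetP => v; rewrite !inE /= andbT. done.
have [z [zin hz]] := IH ltac:(discriminate).
exists z; split; first by rewrite inE zin orbT.
exact: E1 hz h.
Qed.

Lemma key_exists (V : finType) (R : form V -> form V -> Prop) (HE : E_relation R) t w0 :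
  ~~ sat w0 t -> exists w, ~~ sat w t /\ R (tw w) t.
Proof.
move=> h0. have HE' := HE. case: HE' => E1 [E2 [E3 _]].
set s := enum [set w | ~~ sat w t].
have Hs : s <> [::].
  move=> E. have : w0 \in s by rewrite mem_enum inE.
  by rewrite E.
have [w [ws hw]] := R_bigAnd HE (@tw V) Hs.
exists w; split; first by move: ws; rewrite mem_enum inE.
apply: E1 hw _. apply: E2. apply/subsetP => v; rewrite inE sat_fold => /allP H.
rewrite inE. case sv: (sat v t) => //.
have := H v. rewrite mem_enum inE sv => /(_ isT).
by rewrite (negbTE (tw_spec v).1).
Qed.

Definition ltw (V : finType) (R : form V -> form V -> Prop) (v w : world V) : bool :=
  if excluded_middle_informative (R (tw v) (tw w) /\ ~ R (tw w) (tw v)) then true else false.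

Lemma ltwP (V : finType) (R : form V -> form V -> Prop) v w :
  reflect (R (tw v) (tw w) /\ ~ R (tw w) (tw v)) (ltw R v w).
Proof. rewrite /ltw; case: excluded_middle_informative => h; by constructor. Qed.

Definition rr (V : finType) (R : form V -> form V -> Prop) (w : world V) : nat :=
  #|[set v | ltw R v w]|.

Lemma rr_lt_card (V : finType) (R : form V -> form V -> Prop) w : rr R w < #|world V|.
Proof.
rewrite /rr -cardsT; apply: proper_card; rewrite properT; apply/eqP => E.
have : w \in [set v | ltw R v w] by rewrite E inE.
rewrite inE => /ltwP [h1 h2]. exact: h2 h1.
Qed.

Lemma rr_le (V : finType) (R : form V -> form V -> Prop) (HE : E_relation R) v w :
  R (tw v) (tw w) <-> rr R v <= rr R w.
Proof.
have HE' := HE. case: HE' => E1 [E2 [E3 _]].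
have sub : forall a b, R (tw a) (tw b) -> [set u | ltw R u a] \subset [set u | ltw R u b].
  move=> a b hab; apply/subsetP => u; rewrite !inE => /ltwP [h1 h2]; apply/ltwP; split.
  - exact: E1 h1 hab.
  - move=> h3; apply: h2; exact: E1 hab h3.
split => [h|]; first exact: subset_leq_card (sub _ _ h).
move=> hle. apply: NNPP => hn.
have hwv : R (tw w) (tw v) by case: (R_total HE (tw v) (tw w)).
have : rr R w < rr R v.
  apply: proper_card; apply/properP; split; first exact: sub.
  exists w; first by rewrite inE; apply/ltwP.
  by rewrite inE; apply/ltwP => -[_ h]; apply: h; apply: E2; exact: subxx.
lia.
Qed.

Definition U0 (V : finType) (R : form V -> form V -> Prop) : seq {set world V} :=
  mkseq (fun i => [set w | rr R w == i]) #|world V|.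

Lemma rank_U0_valid (V : finType) (R : form V -> form V -> Prop) t :
  valid t -> rank (U0 R) (Neg t) = None.
Proof.
move=> Ht; apply: rank_set0; apply/setP => w; rewrite !inE /=.
by move/subsetP: Ht => /(_ w); rewrite !inE => /(_ isT) ->.
Qed.

Lemma rank_U0_nonvalid (V : finType) (R : form V -> form V -> Prop) t :
  ~ valid t -> exists w0, [/\ ~~ sat w0 t, rank (U0 R) (Neg t) = Some (rr R w0) &
     forall w, ~~ sat w t -> rr R w0 <= rr R w].
Proof.
move=> Ht.
have [w1 _ hw1] : exists2 w, w \in [set: world V] & w \notin S t by apply/subsetPn/negP.
rewrite inE in hw1.
case E: (rank (U0 R) (Neg t)) => [i|].
- have [hi hne hbef] := rank_Some E. rewrite size_mkseq in hi. rewrite nth_mkseq // in hne.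
  have [w0 hw0] := set0Pn _ hne. rewrite !inE /= in hw0. case/andP: hw0 => /eqP h0 h1.
  exists w0; split => //; first by rewrite h0.
  move=> w hw. rewrite h0 leqNgt; apply/negP => hlt.
  have := hbef _ hlt. rewrite nth_mkseq; last exact: ltn_trans hlt hi.
  by move/setP => /(_ w); rewrite !inE /= eqxx hw.
- have := (rank_None _ _).1 E (nth set0 (U0 R) (rr R w1)).
  rewrite mem_nth; last by rewrite size_mkseq rr_lt_card.
  rewrite nth_mkseq; last exact: rr_lt_card.
  by move=> /(_ isT) /setP /(_ w1); rewrite !inE /= eqxx hw1.
Qed.

Theorem proposition3 (V : finType) (R : form V -> form V -> Prop) :
  E_relation R <->
  exists U : seq {set world V},
    in_Upsilon U /\ (forall t f, R t f <-> preceq_U U t f).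
Proof.
split.
- move=> HE. have HE' := HE. case: HE' => E1 [E2 [E3 E4]].
  case: (classic (exists g, R (Bot V) g /\ ~ R g (Bot V))) => NT.
  + have NTf := E4 NT.
    exists (U0 R). split.
    * split; [split|left].
      -- rewrite size_mkseq. exact: leq_ltn_trans (leq0n _) (rr_lt_card R [ffun=> true]).
      -- move=> i j; rewrite size_mkseq => hi hj hij; rewrite !nth_mkseq //.
         apply/setP => w; rewrite !inE. case: eqP => //= h1. case: eqP => //= h2.
         by rewrite -h1 -h2 eqxx in hij.
      -- apply/eqP/setP => w; rewrite inE bigcup_seq_mem; apply/hasP.
         exists (nth set0 (U0 R) (rr R w)).
         ++ by apply: mem_nth; rewrite size_mkseq rr_lt_card.
         ++ by rewrite nth_mkseq ?inE // rr_lt_card.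
    * move=> t f; rewrite preceqE.
      have key : forall g, ~ valid g -> forall w0, ~~ sat w0 g ->
          (forall w, ~~ sat w g -> rr R w0 <= rr R w) -> R g (tw w0) /\ R (tw w0) g.
        move=> g hg w0 h0 hmin. split.
        - apply: E2. exact: (tw_spec w0).2.
        - have [w [hw1 hw2]] := key_exists HE h0.
          apply: E1 _ hw2. apply/(rr_le HE). exact: hmin.
      case: (classic (valid f)) => Hf.
      -- rewrite (rank_U0_valid R Hf).
         have hh : R t f by apply: E2; exact: subset_trans (subsetT _) Hf.
         by case: (rank _ _) => [i|] /=; split.
      have [w1 [h1 e1 m1]] := rank_U0_nonvalid R Hf. rewrite e1.
      case: (classic (valid t)) => Ht.
      -- rewrite (rank_U0_valid R Ht) /=. split => // h. exfalso; apply: Hf.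
         apply: NTf => t'. apply: E1 _ h. apply: E2. exact: subset_trans (subsetT _) Ht.
      have [w0 [h0 e0 m0]] := rank_U0_nonvalid R Ht. rewrite e0 /=.
      have [k1 k2] := key f Hf w1 h1 m1.
      have [k3 k4] := key t Ht w0 h0 m0.
      rewrite -(rr_le HE). split => h.
      ++ exact: E1 k4 (E1 _ _ _ h k1).
      ++ exact: E1 k3 (E1 _ _ _ h k2).
  + exists [:: set0]. split.
    * split; first by split => //; move=> [|i] [|j].
      right. by rewrite /emptyseq big_cons big_nil setU0 eqxx.
    * move=> t f. rewrite preceqE.
      have hN : forall g : form V, rank [:: (set0 : {set world V})] g = None by move=> g; rewrite rank_cons set0I eqxx.
      rewrite !hN /=. split => // _.
      have hb : forall g, R g (Bot V).
        move=> g; apply: NNPP => hn; apply: NT; exists g; split => //.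
        apply: E2; apply/subsetP => w; rewrite inE.  done.
      apply: E1 (hb t) _. apply: E2; apply/subsetP => w; rewrite inE. done.
- move=> [U [HU HR]].
  have -> : R = (fun t f => le_rank (rank U (Neg t)) (rank U (Neg f))).
    apply: functional_extensionality => t; apply: functional_extensionality => f.
    apply: propositional_extensionality. rewrite HR. exact: preceqE.
  exact: dir2.
Qed.
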